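(* Consider the Latex Particles Morphology Formation population balance system described in the context, with parameters $a \in \mathbb{R}$, $0<b<1$ and $v_0 = \lambda_{\mathrm{c}} > 0$. If $m(v,t)$, $w(v,t)$ are the solutions of this system, then $m(v,t) = w(v,t) = 0$ for all $v \in [0,v_0)$ and all $t \in \mathbb{R}^+$.
   Context: Fix real constants $a,b$ and positive constants $\lambda_{\mathrm{a}},\lambda_{\mathrm{c}},\lambda_{\mathrm{d}},\lambda_{\mathrm{m}},\lambda_{\mathrm{n}},\lambda_{\mathrm{p}},\lambda_{\mathrm{pol1}}$, $\bar\Psi>0$, $\Psi_r>0$, $\Phi_s\in(0,1)$. Set $v_0:=\lambda_{\mathrm{c}}$ and $\mu:=\lambda_{\mathrm{m}}$. The unknowns are densities $m(v,t), w(v,t)$ ($v,t\ge 0$) and scalar functions $V^{\mathrm{mat}}(t),V^{\mathrm{c_m}}(t),V^{\mathrm{c_w}}(t),\Psi(t),V_{\mathrm{pol2}}(t)$. Define $\alpha(v,u,t):=\tilde\alpha_0(t)[v^a+u^a]$, $\tilde\alpha_0(t):=\lambda_{\mathrm{a}}(\Psi(t)+1)^{14/3}$; $g(v,t):=\tilde\varrho_{\mathrm{d}}(t)v^b+\tilde\varrho_{\mathrm{p}}(t)v$, $\tilde\varrho_{\mathrm{p}}(t):=\lambda_{\mathrm{p}}\Psi(t)/V_p(t)$, $\tilde\varrho_{\mathrm{d}}(t):=\lambda_{\mathrm{d}}\Phi(t)(\Psi(t)+1)^{2/3}$; $n(v,t):=\tilde\eta_0(t)\delta(v-v_0)$ with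 $\tilde\eta_0(t):=\lambda_{\mathrm{n}}\Phi(t)$ and $\delta$ the Dirac delta; $\Phi(t):=\max\{V^{\mathrm{mat}}(t)/[(\Psi(t)+1)(V^{\mathrm{mat}}(t)+\lambda_{\mathrm{pol1}})]-\Phi_s,0\}$; $V_p(t):=(\Psi(t)+1)[V^{\mathrm{mat}}(t)+V^{\mathrm{c_m}}(t)+V^{\mathrm{c_w}}(t)+\lambda_{\mathrm{pol1}}]$; $\Sigma_y(t):=(\Psi(t)+1)^{2/3}\int_0^\infty v^b y(v,t)\,dv$ for $y=m,w$. The system is: for all $v,t>0$, $\partial_t m=-\partial_v(g m)+n-\mu m-m(v,t)\int_0^\infty\alpha(v,u,t)m(u,t)\,du+\tfrac12\int_0^v\alpha(v-u,u,t)m(v-u,t)m(u,t)\,du$, $\partial_t w=-\partial_v(g w)+\mu m-w(v,t)\int_0^\infty\alpha(v,u,t)w(u,t)\,du+\tfrac12\int_0^v\alpha(v-u,u,t)w(v-u,t)w(u,t)\,du$, with $m(v,0)=w(v,0)=0$, $m(0,t)=w(0,t)=0$; coupled to the ODEs $\dot V^{\mathrm{mat}}=\lambda_{\mathrm{p}}\frac{\Psi}{V_p}(V^{\mathrm{mat}}+\lambda_{\mathrm{pol1}})-\Phi[\lambda_{\mathrm{c}}\lambda_{\mathrm{n}}+\lambda_{\mathrm{d}}\Sigma_m+\lambda_{\mathrm{d}}\Sigma_w]$, $\dot V^{\mathrm{c_m}}=\lambda_{\mathrm{p}}\frac{\Psi}{V_p}V^{\mathrm{c_m}}+\Phi[\lambda_{\mathrm{c}}\lambda_{\mathrm{n}}+\lambda_{\mathrm{d}}\Sigma_m]-\lambda_{\mathrm{m}}V^{\mathrm{c_m}}$,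 $\dot V^{\mathrm{c_w}}=\lambda_{\mathrm{p}}\frac{\Psi}{V_p}V^{\mathrm{c_w}}+\lambda_{\mathrm{d}}\Phi\Sigma_w+\lambda_{\mathrm{m}}V^{\mathrm{c_m}}$, $\dot\Psi=-\lambda_{\mathrm{p}}\frac{\Psi}{\Psi+1}\frac{\Psi+\Psi_r}{V_{\mathrm{pol2}}+\lambda_{\mathrm{pol1}}}$, $\dot V_{\mathrm{pol2}}=\lambda_{\mathrm{p}}\frac{\Psi}{\Psi+1}$, with $V^{\mathrm{mat}}(0)=V^{\mathrm{c_m}}(0)=V^{\mathrm{c_w}}(0)=V_{\mathrm{pol2}}(0)=0$, $\Psi(0)=\bar\Psi$. Solutions $m,w$ are understood to be non-negative functions. *)

(* Defs.v *)
From Stdlib Require Import Reals.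
From Coquelicot Require Import Coquelicot.
Open Scope R_scope.

(* x ^ y for real exponent; x > 0 is the only case that matters; we set
   rpow x y := 0 for x <= 0 (so that 0^b = 0 for b > 0). *)
Definition rpow (x y : R) : R := if Rlt_dec 0 x then Rpower x y else 0.

Record LPMF_params := {
  p_a : R; p_b : R;
  lam_a : R; lam_c : R; lam_d : R; lam_m : R; lam_n : R; lam_p : R;
  lam_pol1 : R; Psi_bar : R; Psi_r : R; Phi_s : R }.

Definition params_ok (p : LPMF_params) : Prop :=
  0 < lam_a p /\ 0 < lam_c p /\ 0 < lam_d p /\ 0 < lam_m p /\ 0 < lam_n p /\
  0 < lam_p p /\ 0 < lam_pol1 p /\ 0 < Psi_bar p /\ 0 < Psi_r p /\
  0 < Phi_s p < 1.

Section Model.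
Variable p : LPMF_params.
Variables Vmat Vcm Vcw Psi Vpol2 : R -> R.

Definition v0 : R := lam_c p.
Definition mu : R := lam_m p.

Definition Phi (t : R) : R :=
  Rmax (Vmat t / ((Psi t + 1) * (Vmat t + lam_pol1 p)) - Phi_s p) 0.

Definition Vp (t : R) : R :=
  (Psi t + 1) * (Vmat t + Vcm t + Vcw t + lam_pol1 p).

Definition alpha0 (t : R) : R := lam_a p * rpow (Psi t + 1) (14/3).
Definition alpha (v u t : R) : R := alpha0 t * (rpow v (p_a p) + rpow u (p_a p)).

Definition rho_p (t : R) : R := lam_p p * Psi t / Vp t.
Definition rho_d (t : R) : R := lam_d p * Phi t * rpow (Psi t + 1) (2/3).
Definition growth (v t : R) : R := rho_d t * rpow v (p_b p) + rho_p t * v.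

Definition eta0 (t : R) : R := lam_n p * Phi t.

Definition Sigma_integrand (y : R -> R -> R) (t : R) : R -> R :=
  fun v => rpow v (p_b p) * y v t.
Definition Sigma (y : R -> R -> R) (t : R) : R :=
  rpow (Psi t + 1) (2/3) *
  RInt_gen (Sigma_integrand y t) (at_point 0) (Rbar_locally p_infty).

Definition loss_integrand (y : R -> R -> R) (v t : R) : R -> R :=
  fun u => alpha v u t * y u t.
Definition loss (y : R -> R -> R) (v t : R) : R :=
  y v t * RInt_gen (loss_integrand y v t) (at_right 0) (Rbar_locally p_infty).

Definition gain_integrand (y : R -> R -> R) (v t : R) : R -> R :=
  fun u => alpha (v - u) u t * y (v - u) t * y u t.
Definition gain (y : R -> R -> R) (v t : R) : R :=
  / 2 * RInt_gen (gain_integrand y v t) (at_right 0) (at_left v).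

Definition flux (y : R -> R -> R) (t : R) : R -> R := fun v => growth v t * y v t.

End Model.

Definition cont_quadrant_off (v0' : R) (f : R -> R -> R) : Prop :=
  forall v t, 0 <= v -> 0 <= t -> v <> v0' ->
  forall eps : posreal, exists delta : posreal, forall v' t',
    0 <= v' -> 0 <= t' -> Rabs (v' - v) < delta -> Rabs (t' - t) < delta ->
    Rabs (f v' t' - f v t) < eps.

(* The nucleation term n(v,t) = eta0(t) delta(v - v0) vanishes for v <> v0,
   so the PDEs are required to hold pointwise for all v, t > 0 with v <> v0. *)
Definition LPMF_solution (p : LPMF_params) (m w : R -> R -> R)
    (Vmat Vcm Vcw Psi Vpol2 : R -> R) : Prop :=
  let g := growth p Vmat Vcm Vcw Psi in
  let Sg := Sigma p Psi in
  let Phi_ := Phi p Vmat Psi in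
  let Vp_ := Vp p Vmat Vcm Vcw Psi in
  (forall v t, 0 <= v -> 0 <= t -> 0 <= m v t /\ 0 <= w v t) /\
  cont_quadrant_off (v0 p) m /\ cont_quadrant_off (v0 p) w /\
  (forall v, 0 <= v -> m v 0 = 0 /\ w v 0 = 0) /\
  (forall t, 0 <= t -> m 0 t = 0 /\ w 0 t = 0) /\
  (forall v t, 0 < v -> 0 < t -> v <> v0 p ->
     ex_derive (fun s => m v s) t /\ ex_derive (fun s => w v s) t /\
     ex_derive (flux p Vmat Vcm Vcw Psi m t) v /\
     ex_derive (flux p Vmat Vcm Vcw Psi w t) v /\
     ex_RInt_gen (loss_integrand p Psi m v t) (at_right 0) (Rbar_locally p_infty) /\
     ex_RInt_gen (loss_integrand p Psi w v t) (at_right 0) (Rbar_locally p_infty) /\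
     ex_RInt_gen (gain_integrand p Psi m v t) (at_right 0) (at_left v) /\
     ex_RInt_gen (gain_integrand p Psi w v t) (at_right 0) (at_left v) /\
     Derive (fun s => m v s) t =
       - Derive (flux p Vmat Vcm Vcw Psi m t) v - mu p * m v t
       - loss p Psi m v t + gain p Psi m v t /\
     Derive (fun s => w v s) t =
       - Derive (flux p Vmat Vcm Vcw Psi w t) v + mu p * m v t
       - loss p Psi w v t + gain p Psi w v t) /\
  (forall t, 0 <= t ->
     ex_RInt_gen (Sigma_integrand p m t) (at_point 0) (Rbar_locally p_infty) /\
     ex_RInt_gen (Sigma_integrand p w t) (at_point 0) (Rbar_locally p_infty)) /\
  Vmat 0 = 0 /\ Vcm 0 = 0 /\ Vcw 0 = 0 /\ Vpol2 0 = 0 /\ Psi 0 = Psi_bar p /\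
  filterlim Vmat (at_right 0) (locally (Vmat 0)) /\
  filterlim Vcm (at_right 0) (locally (Vcm 0)) /\
  filterlim Vcw (at_right 0) (locally (Vcw 0)) /\
  filterlim Psi (at_right 0) (locally (Psi 0)) /\
  filterlim Vpol2 (at_right 0) (locally (Vpol2 0)) /\
  (forall t, 0 < t ->
     is_derive Vmat t
       (lam_p p * Psi t / Vp_ t * (Vmat t + lam_pol1 p)
        - Phi_ t * (lam_c p * lam_n p + lam_d p * Sg m t + lam_d p * Sg w t)) /\
     is_derive Vcm t
       (lam_p p * Psi t / Vp_ t * Vcm t
        + Phi_ t * (lam_c p * lam_n p + lam_d p * Sg m t) - lam_m p * Vcm t) /\
     is_derive Vcw t
       (lam_p p * Psi t / Vp_ t * Vcw t + lam_d p * Phi_ t * Sg w t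
        + lam_m p * Vcm t) /\
     is_derive Psi t
       (- lam_p p * (Psi t / (Psi t + 1)) * ((Psi t + Psi_r p) / (Vpol2 t + lam_pol1 p))) /\
     is_derive Vpol2 t (lam_p p * (Psi t / (Psi t + 1)))).

(* Main.v *)
Require Import Defs.
From Stdlib Require Import Reals Lra Classical ClassicalEpsilon.
From Coquelicot Require Import Coquelicot.
Open Scope R_scope.

Lemma rpow_ge0 x y : 0 <= rpow x y.
Proof. unfold rpow; destruct (Rlt_dec 0 x); [unfold Rpower; left; apply exp_pos | lra]. Qed.

Lemma rpow_mono b s x : 0 < b -> 0 <= s <= x -> rpow s b <= rpow x b.
Proof.
  intros hb [h1 h2]. unfold rpow.
  destruct (Rlt_dec 0 s); destruct (Rlt_dec 0 x); try lra.
  - apply Rle_Rpower_l; lra.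
  - unfold Rpower; left; apply exp_pos.
Qed.

Lemma rpow_cont a u : 0 < u -> continuous (fun x => rpow x a) u.
Proof.
  intros hu.
  apply continuous_ext_loc with (fun x => Rpower x a).
  - exists (mkposreal u hu). intros y hy. unfold rpow.
    destruct (Rlt_dec 0 y); auto. exfalso. apply n.
    unfold ball in hy; simpl in hy; unfold AbsRing_ball, abs, minus, plus, opp in hy; simpl in hy.
    apply Rabs_lt_between in hy. lra.
  - apply (ex_derive_continuous (K:=R_AbsRing) (V:=R_NormedModule)). exists (a * Rpower u (a - 1)).
    apply is_derive_Reals. apply derivable_pt_lim_power; auto.
Qed.

Lemma deriv_left_ge (f : R -> R) x l c d :
  0 < d -> is_derive f x l ->
  (forall s, x - d < s < x -> f s - c * s <= f x - c * x) -> c <= l.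
Proof.
  intros hd hD hs. apply is_derive_Reals in hD.
  destruct (Rle_or_lt c l) as [h|h]; auto. exfalso.
  destruct (hD (c - l) ltac:(lra)) as [del hdel].
  set (h0 := - Rmin del d / 2).
  assert (hm1 : 0 < Rmin del d) by (apply Rmin_pos; [apply cond_pos | lra]).
  assert (hm2 : Rmin del d <= d) by apply Rmin_r.
  assert (hm3 : Rmin del d <= del) by apply Rmin_l.
  assert (hh : h0 <> 0) by (unfold h0; lra).
  assert (ha : Rabs h0 < del) by (unfold h0; rewrite Rabs_left; lra).
  specialize (hdel h0 hh ha).
  specialize (hs (x + h0) ltac:(unfold h0; lra)).
  assert (q : c <= (f (x + h0) - f x) / h0).
  { apply Rmult_le_reg_r with (- h0). unfold h0; lra.
    replace ((f (x + h0) - f x) / h0 * - h0) with (f x - f (x+h0)) by (field; auto).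
    lra. }
  apply Rabs_lt_between in hdel. lra.
Qed.

Lemma cont_v (y : R -> R -> R) v0' u t : cont_quadrant_off v0' y -> 0 < u -> u <> v0' -> 0 <= t ->
  continuous (fun x => y x t) u.
Proof.
  intros hc hu hne ht. apply continuity_pt_filterlim.
  intros eps heps.
  destruct (hc u t ltac:(lra) ht hne (mkposreal eps heps)) as [del hdel].
  exists (Rmin del u). split. apply Rmin_pos; [apply cond_pos|lra].
  intros x [_ hx]. unfold R_dist in *. simpl in *.
  assert (Rabs (x - u) < del) by (eapply Rlt_le_trans; [apply hx| apply Rmin_l]).
  assert (Rabs (x - u) < u) by (eapply Rlt_le_trans; [apply hx| apply Rmin_r]).
  apply Rabs_lt_between in H0.
  apply hdel; try lra. rewrite Rminus_diag, Rabs_R0. apply cond_pos.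
Qed.
Lemma unpack_RL (f : R -> R) x y : ex_RInt_gen f (at_right x) (at_left y) ->
  forall eps, 0 < eps -> exists eta, 0 < eta /\ forall a b, x < a < x + eta -> y - eta < b < y ->
  exists z, is_RInt f a b z /\ Rabs (z - RInt_gen f (at_right x) (at_left y)) < eps.
Proof.
  intros [l hl] eps heps.
  assert (hu : RInt_gen f (at_right x) (at_left y) = l).
  { apply (is_RInt_gen_unique (Fa := at_right x) (Fb := at_left y)); exact hl. }
  rewrite hu.
  destruct (hl _ (locally_ball l (mkposreal eps heps))) as [Q R [e1 h1] [e2 h2] hQR].
  exists (Rmin e1 e2). split. apply Rmin_pos; apply cond_pos.
  intros a b ha hb.
  assert (Rmin e1 e2 <= e1) by apply Rmin_l. assert (Rmin e1 e2 <= e2) by apply Rmin_r.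
  destruct (hQR a b) as [z [hz1 hz2]].
  - apply h1; [| lra]. unfold ball; simpl; unfold AbsRing_ball, abs, minus, plus, opp; simpl.
    rewrite Rabs_right; lra.
  - apply h2; [| lra]. unfold ball; simpl; unfold AbsRing_ball, abs, minus, plus, opp; simpl.
    rewrite Rabs_left; lra.
  - exists z; split; [exact hz1| exact hz2].
Qed.

Lemma unpack_Rinf (f : R -> R) x : ex_RInt_gen f (at_right x) (Rbar_locally p_infty) ->
  forall eps, 0 < eps -> exists eta, 0 < eta /\ exists B, forall a b, x < a < x + eta -> B < b ->
  exists z, is_RInt f a b z /\ Rabs (z - RInt_gen f (at_right x) (Rbar_locally p_infty)) < eps.
Proof.
  intros [l hl] eps heps.
  assert (hu : RInt_gen f (at_right x) (Rbar_locally p_infty) = l).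
  { apply (is_RInt_gen_unique (Fa := at_right x) (Fb := Rbar_locally p_infty)); exact hl. }
  rewrite hu.
  destruct (hl _ (locally_ball l (mkposreal eps heps))) as [Q R [e1 h1] [B h2] hQR].
  exists e1. split. apply cond_pos. exists B.
  intros a b ha hb.
  destruct (hQR a b) as [z [hz1 hz2]].
  - apply h1; [| lra]. unfold ball; simpl; unfold AbsRing_ball, abs, minus, plus, opp; simpl.
    rewrite Rabs_right; lra.
  - apply h2; lra.
  - exists z; split; [exact hz1| exact hz2].
Qed.
Lemma cmul (f g : R -> R) x : continuous f x -> continuous g x -> continuous (fun y => f y * g y) x.
Proof. intros. apply (continuous_mult (K:=R_AbsRing) f g); auto. Qed.
Lemma cadd (f g : R -> R) x : continuous f x -> continuous g x -> continuous (fun y => f y + g y) x.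
Proof. intros. apply (continuous_plus (K:=R_AbsRing) (V:=R_NormedModule) f g); auto. Qed.
Lemma ccst (c x : R) : continuous (fun _ : R => c) x.
Proof. apply (continuous_const (U:=R_UniformSpace) (V:=R_UniformSpace)). Qed.
Lemma crefl (v x : R) (g : R -> R) : continuous g (v - x) -> continuous (fun y => g (v - y)) x.
Proof. intros h. apply (continuous_comp (fun y => v - y) g). 
  apply (continuous_minus (K:=R_AbsRing) (V:=R_NormedModule) (fun _ => v) (fun y => y)).
  apply ccst. apply (continuous_id (U:=R_UniformSpace)). exact h. Qed.

Lemma gain_le_loss (p : LPMF_params) (Psi : R -> R) (y : R -> R -> R) v t :
  0 <= lam_a p -> cont_quadrant_off (v0 p) y -> 0 < v < v0 p -> 0 <= t ->
  (forall u, 0 <= u -> 0 <= y u t) ->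
  (forall u, 0 <= u <= v -> y u t <= y v t) ->
  ex_RInt_gen (loss_integrand p Psi y v t) (at_right 0) (Rbar_locally p_infty) ->
  ex_RInt_gen (gain_integrand p Psi y v t) (at_right 0) (at_left v) ->
  gain p Psi y v t <= loss p Psi y v t.
Proof.
  intros hla hc hv ht hnn hmax exL exG.
  set (M := y v t).
  set (a := p_a p).
  set (A0 := alpha0 p Psi t).
  assert (hA0 : 0 <= A0).
  { unfold A0, alpha0. apply Rmult_le_pos; auto. apply rpow_ge0. }
  assert (hM : 0 <= M) by (apply hnn; lra).
  set (IG := RInt_gen (gain_integrand p Psi y v t) (at_right 0) (at_left v)).
  set (IL := RInt_gen (loss_integrand p Psi y v t) (at_right 0) (Rbar_locally p_infty)).
  set (G := gain_integrand p Psi y v t).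
  set (L := loss_integrand p Psi y v t).
  set (G1 := fun u => A0 * rpow u a * y (v - u) t * y u t).
  set (G2 := fun u => A0 * rpow (v - u) a * y (v - u) t * y u t).
  assert (hG : forall u, G u = G2 u + G1 u).
  { intro u. unfold G, G1, G2, gain_integrand, alpha. fold A0 a. ring. }
  assert (hcy : forall u, 0 < u < v0 p -> continuous (fun x => y x t) u).
  { intros u hu. apply cont_v with (v0 p); auto; lra. }
  assert (cG1 : forall z, 0 < z < v -> continuous G1 z).
  { intros z hz. unfold G1. apply cmul; [apply cmul; [apply cmul|]|].
    apply ccst. apply rpow_cont; lra. apply (crefl v z (fun x => y x t)). apply hcy; lra. apply hcy; lra. }
  assert (cG2 : forall z, 0 < z < v -> continuous G2 z).
  { intros z hz. unfold G2. apply cmul; [apply cmul; [apply cmul|]|].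
    apply ccst. apply (crefl v z (fun x => rpow x a)). apply rpow_cont; lra. apply (crefl v z (fun x => y x t)). apply hcy; lra. apply hcy; lra. }
  assert (hL : forall u, L u = A0 * (rpow v a + rpow u a) * y u t).
  { intro u. unfold L, loss_integrand, alpha. fold A0 a. ring. }
  assert (hLnn : forall u, 0 < u -> 0 <= L u).
  { intros u hu. rewrite hL. apply Rmult_le_pos; [apply Rmult_le_pos; auto|apply hnn; lra].
    apply Rplus_le_le_0_compat; apply rpow_ge0. }
  assert (key : forall eps, 0 < eps -> IG <= 2 * M * IL + (1 + 2 * M) * eps).
  { intros eps heps.
    destruct (unpack_RL G 0 v exG eps heps) as [e1 [he1 hG1]].
    destruct (unpack_Rinf L 0 exL eps heps) as [e2 [he2 [B hL1]]].
    set (d := Rmin (Rmin e1 e2) (v / 2) / 2).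
    assert (hd1 : Rmin (Rmin e1 e2) (v/2) <= Rmin e1 e2) by apply Rmin_l.
    assert (hd2 : Rmin (Rmin e1 e2) (v/2) <= v/2) by apply Rmin_r.
    assert (hd3 : Rmin e1 e2 <= e1) by apply Rmin_l.
    assert (hd4 : Rmin e1 e2 <= e2) by apply Rmin_r.
    assert (hd5 : 0 < Rmin (Rmin e1 e2) (v/2)) by (repeat apply Rmin_pos; lra).
    assert (hd : 0 < d) by (unfold d; lra).
    assert (hdv : d < v / 2) by (unfold d; lra).
    destruct (hG1 d (v - d)) as [zG [izG hzG]]; [unfold d; lra | unfold d; lra |].
    set (b := Rmax B v + 1).
    assert (hb1 : B < b) by (unfold b; generalize (Rmax_l B v); lra).
    assert (hb2 : v < b) by (unfold b; generalize (Rmax_r B v); lra).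
    destruct (hL1 d b) as [zL [izL hzL]]; [unfold d; lra | lra |].
    fold IG in hzG. fold IL in hzL.
    assert (eG1 : ex_RInt G1 d (v - d)).
    { apply (ex_RInt_continuous (V:=R_CompleteNormedModule)). intros z hz. rewrite Rmin_left in hz by lra.
      rewrite Rmax_right in hz by lra. apply cG1; lra. }
    assert (eG2 : ex_RInt G2 d (v - d)).
    { apply (ex_RInt_continuous (V:=R_CompleteNormedModule)). intros z hz. rewrite Rmin_left in hz by lra.
      rewrite Rmax_right in hz by lra. apply cG2; lra. }
    assert (ezG : zG = RInt G2 d (v - d) + RInt G1 d (v - d)).
    { rewrite <- (is_RInt_unique _ _ _ _ izG).
      assert (eq1 : RInt G d (v - d) = RInt (fun u => plus (G2 u) (G1 u)) d (v - d)).
      { apply RInt_ext. intros x _. rewrite hG. reflexivity. }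
      etransitivity. exact eq1.
      apply (RInt_plus (V:=R_CompleteNormedModule)); auto. }
    assert (e21 : RInt G2 d (v - d) = RInt G1 d (v - d)).
    { assert (hx : ex_RInt G1 (-1 * d + v) (-1 * (v - d) + v)).
      { replace (-1 * d + v) with (v - d) by ring.
        replace (-1 * (v - d) + v) with d by ring.
        apply (ex_RInt_swap (V:=R_CompleteNormedModule)). auto. }
      pose proof (RInt_comp_lin (V:=R_CompleteNormedModule) G1 (-1) v d (v - d) hx) as h1.
      replace (-1 * d + v) with (v - d) in h1 by ring.
      replace (-1 * (v - d) + v) with d in h1 by ring.
      rewrite <- (opp_RInt_swap (V:=R_CompleteNormedModule) G1 d (v - d) eG1) in h1.
      match type of h1 with ?X = _ => assert (eq2 : X = RInt (fun u => - (G2 u)) d (v - d)) end.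
      { apply RInt_ext. intros x _. unfold scal, G1, G2; simpl. unfold mult; simpl. 
          replace (v - (-1 * x + v)) with x by ring. replace (-1 * x + v) with (v - x) by ring. ring. }
      assert (eq3 : RInt (fun u => - (G2 u)) d (v - d) = - RInt G2 d (v - d)).
      { apply (RInt_opp (V:=R_CompleteNormedModule)); auto. }
      rewrite eq2, eq3 in h1. unfold opp in h1; simpl in h1. lra. }
    assert (eL : ex_RInt L d b) by (exists zL; auto).
    assert (eL1 : ex_RInt L d (v - d)) by (apply (ex_RInt_Chasles_1 (V:=R_CompleteNormedModule)) with b; auto; lra).
    assert (eL2 : ex_RInt L (v - d) b) by (apply (ex_RInt_Chasles_2 (V:=R_CompleteNormedModule)) with d; auto; lra).
    assert (hchas : plus (RInt L d (v - d)) (RInt L (v - d) b) = RInt L d b)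
      by (apply (RInt_Chasles (V:=R_CompleteNormedModule)); auto).
    unfold plus in hchas; simpl in hchas.
    rewrite (is_RInt_unique _ _ _ _ izL) in hchas.
    assert (hpos : 0 <= RInt L (v - d) b) by (apply RInt_ge_0; auto; [lra | intros; apply hLnn; lra]).
    assert (hle : RInt G1 d (v - d) <= RInt (fun u => scal M (L u)) d (v - d)).
    { apply RInt_le; auto; [lra | apply (ex_RInt_scal (V:=R_NormedModule)); auto |].
      intros x hx. unfold scal; simpl; unfold mult; simpl. rewrite hL. unfold G1.
      assert (h1 : y (v - x) t <= M) by (apply hmax; lra).
      assert (h2 : 0 <= y x t) by (apply hnn; lra).
      assert (h3 : 0 <= rpow x a) by apply rpow_ge0.
      assert (h4 : 0 <= rpow v a) by apply rpow_ge0.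
      assert (0 <= A0 * rpow x a * y x t) by (apply Rmult_le_pos; [apply Rmult_le_pos|]; auto).
      assert (0 <= A0 * rpow v a * y x t) by (apply Rmult_le_pos; [apply Rmult_le_pos|]; auto).
      nra. }
    rewrite (RInt_scal (V:=R_CompleteNormedModule)) in hle by auto. unfold scal in hle; simpl in hle; unfold mult in hle; simpl in hle.
    apply Rabs_lt_between in hzG. apply Rabs_lt_between in hzL.
    assert (p1 : 0 <= M * RInt L (v - d) b) by (apply Rmult_le_pos; auto).
    assert (p2 : M * (zL - IL) <= M * eps). { apply Rmult_le_compat_l; auto. change (RInt_gen L (at_right 0) (Rbar_locally p_infty)) with IL in hzL. lra. }
    change (RInt_gen G (at_right 0) (at_left v)) with IG in hzG.
    change (RInt_gen L (at_right 0) (Rbar_locally p_infty)) with IL in hzL.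
    assert (p3 : M * RInt L d (v - d) + M * RInt L (v - d) b = M * zL) by (rewrite <- hchas; ring). lra. }
  assert (hIG : IG <= 2 * M * IL).
  { apply Rnot_lt_le. intro hlt.
    set (eps := (IG - 2 * M * IL) / (2 * (1 + 2 * M))).
    assert (heps : 0 < eps) by (unfold eps; apply Rdiv_lt_0_compat; lra).
    specialize (key eps heps).
    assert ((1 + 2 * M) * eps = (IG - 2 * M * IL) / 2) by (unfold eps; field; lra).
    lra. }
  unfold gain, loss. fold IG IL. fold M. lra.
Qed.

Lemma unif_t (y : R -> R -> R) V v0' : 0 <= V < v0' -> cont_quadrant_off v0' y ->
  forall t, 0 <= t -> forall eps, 0 < eps -> exists del, 0 < del /\
  forall t', 0 <= t' -> Rabs (t' - t) < del -> forall v, 0 <= v <= V -> Rabs (y v t' - y v t) < eps.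
Proof.
  intros hV hc t ht eps heps.
  assert (hg : forall c, exists dl : posreal, 0 <= c <= V -> forall v' t', 0 <= v' -> 0 <= t' ->
     Rabs (v' - c) < dl -> Rabs (t' - t) < dl -> Rabs (y v' t' - y c t) < eps / 2).
  { intro c. destruct (Rle_dec 0 c) as [h0|h0]; [destruct (Rle_dec c V) as [h1|h1]|].
    - destruct (hc c t h0 ht ltac:(lra) (mkposreal (eps/2) ltac:(lra))) as [dl hdl].
      exists dl. intros _. exact hdl.
    - exists (mkposreal 1 Rlt_0_1). intros; lra.
    - exists (mkposreal 1 Rlt_0_1). intros; lra. }
  set (delta := fun c => proj1_sig (constructive_indefinite_description _ (hg c))).
  assert (hdelta : forall c, 0 <= c <= V -> forall v' t', 0 <= v' -> 0 <= t' ->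
     Rabs (v' - c) < delta c -> Rabs (t' - t) < delta c -> Rabs (y v' t' - y c t) < eps / 2).
  { intro c. unfold delta. destruct (constructive_indefinite_description _ (hg c)) as [x hx]. simpl. exact hx. }
  destruct (compactness_value_1d 0 V delta) as [d hd].
  exists d. split. apply cond_pos.
  intros t' ht' hdt v hv.
  apply NNPP. intro hn. apply (hd v hv). intros [c [hc1 [hc2 hc3]]]. apply hn.
  assert (h1 := hdelta c hc1 v t' ltac:(lra) ht' hc2 ltac:(lra)).
  assert (h2 := hdelta c hc1 v t ltac:(lra) ht hc2 ltac:(rewrite Rminus_diag, Rabs_R0; apply cond_pos)).
  replace (y v t' - y v t) with ((y v t' - y c t) - (y v t - y c t)) by ring.
  eapply Rle_lt_trans. apply Rabs_triang. rewrite Rabs_Ropp. lra.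
Qed.

Lemma exists_max (y : R -> R -> R) V v0' : 0 <= V < v0' -> cont_quadrant_off v0' y ->
  forall t, exists vm, 0 <= vm <= V /\ (0 <= t -> forall v, 0 <= v <= V -> y v t <= y vm t).
Proof.
  intros hV hc t. destruct (Rle_dec 0 t) as [ht|ht].
  2:{ exists 0. split. lra. intros; lra. }
  destruct (continuity_ab_maj (fun v => y (Rmax 0 v) t) 0 V ltac:(lra)) as [Mx [hM1 hM2]].
  - intros c hcV. intros eps heps.
    destruct (hc c t ltac:(lra) ht ltac:(lra) (mkposreal eps heps)) as [dl hdl].
    exists dl. split. apply cond_pos. intros x [_ hx]. unfold R_dist in *; simpl in *.
    rewrite (Rmax_right 0 c) by lra.
    apply hdl. apply Rmax_l. lra.
    + unfold Rmax. destruct (Rle_dec 0 x). auto. rewrite Rabs_left1 by lra.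
      assert (Rabs (x - c) < dl) by exact hx. rewrite Rabs_left in H by lra. lra.
    + rewrite Rminus_diag, Rabs_R0. apply cond_pos.
  - exists Mx. split. auto. intros _ v hv. specialize (hM1 v hv).
    rewrite !Rmax_right in hM1 by lra. exact hM1.
Qed.

Lemma zero_below (p : LPMF_params) (Vmat Vcm Vcw Psi : R -> R) (y : R -> R -> R) V :
  0 <= lam_a p -> 0 < p_b p -> 0 <= lam_d p -> 0 < V < v0 p ->
  (forall t, 0 < t -> 0 <= rho_p p Vmat Vcm Vcw Psi t) ->
  (forall v t, 0 <= v -> 0 <= t -> 0 <= y v t) ->
  cont_quadrant_off (v0 p) y ->
  (forall v, 0 <= v -> y v 0 = 0) ->
  (forall t, 0 <= t -> y 0 t = 0) ->
  (forall v t, 0 < v -> v <= V -> 0 < t ->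
     ex_derive (fun s => y v s) t /\ ex_derive (flux p Vmat Vcm Vcw Psi y t) v /\
     ex_RInt_gen (loss_integrand p Psi y v t) (at_right 0) (Rbar_locally p_infty) /\
     ex_RInt_gen (gain_integrand p Psi y v t) (at_right 0) (at_left v) /\
     Derive (fun s => y v s) t <= - Derive (flux p Vmat Vcm Vcw Psi y t) v
        - loss p Psi y v t + gain p Psi y v t) ->
  forall v t, 0 <= v <= V -> 0 <= t -> y v t = 0.
Proof.
  intros hla hb hld hV hrho hnn hc h0 hb0 hpde v1 t1 hv1 ht1.
  apply NNPP. intro hne.
  assert (hpos : 0 < y v1 t1) by (destruct (hnn v1 t1 ltac:(lra) ht1); [auto | congruence]).
  assert (ht1' : 0 < t1).
  { destruct ht1 as [h|h]; auto. subst t1. rewrite h0 in hpos by lra. lra. }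
  set (vmax := fun t => proj1_sig (constructive_indefinite_description _ (exists_max y V (v0 p) ltac:(lra) hc t))).
  assert (hvm : forall t, 0 <= vmax t <= V /\ (0 <= t -> forall v, 0 <= v <= V -> y v t <= y (vmax t) t)).
  { intro t. unfold vmax. destruct (constructive_indefinite_description _ _) as [x hx]. simpl. exact hx. }
  set (Mf := fun t => y (vmax t) t).
  assert (hMc : forall t, 0 <= t -> forall eps, 0 < eps -> exists del, 0 < del /\
     forall t', 0 <= t' -> Rabs (t' - t) < del -> Rabs (Mf t' - Mf t) < eps).
  { intros t ht eps heps.
    destruct (unif_t y V (v0 p) ltac:(lra) hc t ht eps heps) as [del [hdel hU]].
    exists del. split; auto. intros t' ht' hdt.
    destruct (hvm t) as [hv1a hv1b]. destruct (hvm t') as [hv2a hv2b].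
    assert (a1 := hU t' ht' hdt (vmax t) hv1a).
    assert (a2 := hU t' ht' hdt (vmax t') hv2a).
    assert (b1 := hv1b ht (vmax t') hv2a).
    assert (b2 := hv2b ht' (vmax t) hv1a).
    unfold Mf. apply Rabs_lt_between in a1. apply Rabs_lt_between in a2.
    apply Rabs_def1; lra. }
  assert (hM1 : y v1 t1 <= Mf t1) by (apply (proj2 (hvm t1)); lra).
  set (eps := Mf t1 / (2 * t1)).
  assert (heps : 0 < eps) by (unfold eps; apply Rdiv_lt_0_compat; lra).
  set (psi := fun s => Mf (Rmax 0 s) - eps * s).
  destruct (continuity_ab_maj psi 0 t1 ltac:(lra)) as [ts [hts1 hts2]].
  { intros c hcc. intros e he.
    destruct (hMc c ltac:(lra) (e/2) ltac:(lra)) as [del [hdel hd]].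
    exists (Rmin del (e / (2 * (eps + 1)))). split.
    { apply Rmin_pos; auto. apply Rdiv_lt_0_compat; lra. }
    intros x [_ hx]. unfold R_dist in *; simpl in *.
    assert (hx1 : Rabs (x - c) < del) by (eapply Rlt_le_trans; [apply hx | apply Rmin_l]).
    assert (hx2 : Rabs (x - c) < e / (2 * (eps + 1))) by (eapply Rlt_le_trans; [apply hx | apply Rmin_r]).
    unfold psi. rewrite (Rmax_right 0 c) by lra.
    assert (hr : Rabs (Rmax 0 x - c) < del).
    { unfold Rmax. destruct (Rle_dec 0 x). auto. rewrite Rabs_left1 by lra.
      rewrite Rabs_left in hx1 by lra. lra. }
    specialize (hd (Rmax 0 x) (Rmax_l 0 x) hr).
    assert (hh : eps * Rabs (x - c) <= e / 2).
    { apply Rle_trans with ((eps + 1) * (e / (2 * (eps + 1)))).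
      apply Rmult_le_compat; try lra; apply Rabs_pos.
      right; field; lra. }
    change (Rabs (Mf (Rmax 0 x) - eps * x - (Mf c - eps * c)) < e). replace (Mf (Rmax 0 x) - eps * x - (Mf c - eps * c)) with ((Mf (Rmax 0 x) - Mf c) - eps * (x - c)) by ring.
    assert (hh2 : Rabs (eps * (x - c)) <= e / 2) by (rewrite Rabs_mult, (Rabs_right eps) by lra; lra).
    assert (hh3 := Rabs_triang (Mf (Rmax 0 x) - Mf c) (- (eps * (x - c)))).
    rewrite Rabs_Ropp in hh3. replace (Mf (Rmax 0 x) - Mf c - eps * (x - c)) with ((Mf (Rmax 0 x) - Mf c) + - (eps * (x - c))) by ring. lra. }
  assert (hpsi1 : psi t1 = Mf t1 / 2).
  { unfold psi. rewrite Rmax_right by lra. unfold eps. field. lra. }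
  assert (hpsi0 : psi 0 = 0).
  { unfold psi. rewrite Rmax_left by lra. unfold Mf. rewrite h0. ring. apply (proj1 (hvm 0)). }
  assert (hge : psi t1 <= psi ts) by (apply hts1; lra).
  assert (hts : 0 < ts).
  { destruct (proj1 hts2) as [h|h]; auto. subst ts. lra. }
  set (vs := vmax ts).
  assert (hvs : 0 <= vs <= V) by apply (proj1 (hvm ts)).
  assert (hMts : Mf ts = psi ts + eps * ts) by (unfold psi; rewrite Rmax_right by lra; ring).
  assert (hMpos : 0 < Mf ts) by (assert (0 < eps * ts) by (apply Rmult_lt_0_compat; lra); lra).
  assert (hvs0 : 0 < vs).
  { destruct (proj1 hvs) as [h|h]; auto. exfalso. unfold Mf in hMpos. fold vs in hMpos.
    rewrite <- h in hMpos. rewrite hb0 in hMpos by lra. lra. }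
  destruct (hpde vs ts hvs0 (proj2 hvs) hts) as [exd [exf [exL [exG hineq]]]].
  assert (hdt : eps <= Derive (fun s => y vs s) ts).
  { apply (deriv_left_ge (fun s => y vs s) ts _ eps ts hts).
    apply (Derive_correct (fun s => y vs s)); auto.
    intros s hs. 
    assert (q1 : y vs s <= Mf s) by (apply (proj2 (hvm s)); lra).
    assert (q2 : psi s <= psi ts) by (apply hts1; lra).
    unfold psi in q2. rewrite !Rmax_right in q2 by lra. unfold Mf in q2 at 2. fold vs in q2. lra. }
  assert (hgr : forall s, 0 <= s <= vs -> 0 <= growth p Vmat Vcm Vcw Psi s ts <= growth p Vmat Vcm Vcw Psi vs ts).
  { intros s hs. unfold growth.
    assert (r1 : 0 <= rho_d p Vmat Psi ts).
    { unfold rho_d. apply Rmult_le_pos; [apply Rmult_le_pos|]; auto. unfold Phi. apply Rmax_r. apply rpow_ge0. }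
    assert (r2 := hrho ts hts).
    assert (r3 := rpow_mono (p_b p) s vs hb hs).
    assert (r4 := rpow_ge0 s (p_b p)).
    split. 
    - apply Rplus_le_le_0_compat; apply Rmult_le_pos; lra.
    - apply Rplus_le_compat; [apply Rmult_le_compat_l | apply Rmult_le_compat_l]; lra. }
  assert (hdf : 0 <= Derive (flux p Vmat Vcm Vcw Psi y ts) vs).
  { apply (deriv_left_ge (flux p Vmat Vcm Vcw Psi y ts) vs _ 0 vs hvs0).
    apply (Derive_correct (flux p Vmat Vcm Vcw Psi y ts)); auto.
    intros s hs. unfold flux. rewrite !Rmult_0_l, !Rminus_0_r.
    assert (g1 := hgr s ltac:(lra)).
    assert (q1 : y s ts <= y vs ts) by (apply (proj2 (hvm ts)); lra).
    apply Rmult_le_compat; try lra. apply hnn; lra. }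
  assert (hgl : gain p Psi y vs ts <= loss p Psi y vs ts).
  { apply gain_le_loss; auto; try lra.
    - intros u hu. apply hnn; lra.
    - intros u hu. apply (proj2 (hvm ts)); lra. }
  lra.
Qed.

Lemma right_cont_eps (f : R -> R) a : filterlim f (at_right a) (locally (f a)) ->
  forall eps, 0 < eps -> exists d, 0 < d /\ forall x, a < x < a + d -> Rabs (f x - f a) < eps.
Proof.
  intros hf eps heps.
  destruct (hf _ (locally_ball (f a) (mkposreal eps heps))) as [d hd].
  exists d. split. apply cond_pos. intros x hx. apply (hd x).
  - unfold ball; simpl; unfold AbsRing_ball, abs, minus, plus, opp; simpl. rewrite Rabs_right; lra.
  - lra.
Qed.

Lemma lim_right_le (f : R -> R) a b c : a < b ->
  (forall eps, 0 < eps -> exists d, 0 < d /\ forall x, a < x < a + d -> Rabs (f x - f a) < eps) ->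
  (forall x, a < x < b -> f x <= c) -> f a <= c.
Proof.
  intros hab hf hx. apply Rnot_lt_le. intro hlt.
  destruct (hf (f a - c) ltac:(lra)) as [d [hd hd']].
  assert (0 < Rmin d (b - a)) by (apply Rmin_pos; lra).
  assert (Rmin d (b - a) <= d) by apply Rmin_l. assert (Rmin d (b - a) <= b - a) by apply Rmin_r.
  specialize (hd' (a + Rmin d (b - a) / 2) ltac:(lra)).
  specialize (hx (a + Rmin d (b - a) / 2) ltac:(lra)).
  apply Rabs_lt_between in hd'. lra.
Qed.

Lemma lim_right_ge (f : R -> R) a b c : a < b ->
  (forall eps, 0 < eps -> exists d, 0 < d /\ forall x, a < x < a + d -> Rabs (f x - f a) < eps) ->
  (forall x, a < x < b -> c <= f x) -> c <= f a.
Proof.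
  intros hab hf hx. apply Rnot_lt_le. intro hlt.
  destruct (hf (c - f a) ltac:(lra)) as [d [hd hd']].
  assert (0 < Rmin d (b - a)) by (apply Rmin_pos; lra).
  assert (Rmin d (b - a) <= d) by apply Rmin_l. assert (Rmin d (b - a) <= b - a) by apply Rmin_r.
  specialize (hd' (a + Rmin d (b - a) / 2) ltac:(lra)).
  specialize (hx (a + Rmin d (b - a) / 2) ltac:(lra)).
  apply Rabs_lt_between in hd'. lra.
Qed.

Lemma cont_eps (f : R -> R) x : continuous f x ->
  forall eps, 0 < eps -> exists d, 0 < d /\ forall y, Rabs (y - x) < d -> Rabs (f y - f x) < eps.
Proof.
  intros hf eps heps.
  destruct (hf _ (locally_ball (f x) (mkposreal eps heps))) as [d hd].
  exists d. split. apply cond_pos. intros y hy. apply (hd y). exact hy.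
Qed.

Lemma cont_left_ge (f : R -> R) x d c : 0 < d -> continuous f x ->
  (forall r, x - d < r < x -> c <= f r) -> c <= f x.
Proof.
  intros hd hf hr. apply Rnot_lt_le. intro hlt.
  destruct (cont_eps f x hf (c - f x) ltac:(lra)) as [e [he he']].
  assert (0 < Rmin d e) by (apply Rmin_pos; lra).
  assert (Rmin d e <= d) by apply Rmin_l. assert (Rmin d e <= e) by apply Rmin_r.
  specialize (hr (x - Rmin d e / 2) ltac:(lra)).
  specialize (he' (x - Rmin d e / 2) ltac:(rewrite Rabs_left; lra)).
  apply Rabs_lt_between in he'. lra.
Qed.

Lemma mono_open (f df : R -> R) a b :
  (forall x, a < x < b -> is_derive f x (df x)) -> (forall x, a < x < b -> 0 <= df x) ->
  forall x y, a < x -> x <= y -> y < b -> f x <= f y.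
Proof.
  intros hd hp x y hx hxy hy. destruct hxy as [hlt|heq]; [|subst; lra].
  destruct (MVT_cor2 f df x y hlt) as [c [hc1 hc2]].
  { intros c hc. apply is_derive_Reals. apply hd. lra. }
  assert (0 <= df c) by (apply hp; lra).
  assert (0 <= df c * (y - x)) by (apply Rmult_le_pos; lra). lra.
Qed.

Lemma psi_pos (lp pol1 Pr Pb : R) (Psi Vpol2 : R -> R) :
  0 < lp -> 0 < pol1 -> 0 < Pr -> 0 < Pb -> Psi 0 = Pb -> Vpol2 0 = 0 ->
  filterlim Psi (at_right 0) (locally (Psi 0)) ->
  filterlim Vpol2 (at_right 0) (locally (Vpol2 0)) ->
  (forall t, 0 < t ->
     is_derive Psi t (- lp * (Psi t / (Psi t + 1)) * ((Psi t + Pr) / (Vpol2 t + pol1))) /\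
     is_derive Vpol2 t (lp * (Psi t / (Psi t + 1)))) ->
  forall t, 0 <= t -> 0 < Psi t.
Proof.
  intros hlp hpol hPr hPb hP0 hV0 hlP hlV hder.
  set (dP := fun t => - lp * (Psi t / (Psi t + 1)) * ((Psi t + Pr) / (Vpol2 t + pol1))).
  set (dV := fun t => lp * (Psi t / (Psi t + 1))).
  assert (eP := right_cont_eps Psi 0 hlP).
  assert (eV := right_cont_eps Vpol2 0 hlV).
  assert (cP : forall t, 0 < t -> continuous Psi t).
  { intros t ht. apply (ex_derive_continuous (K:=R_AbsRing) (V:=R_NormedModule)).
    exists (dP t). apply (proj1 (hder t ht)). }
  intros t1 ht1. apply Rnot_le_lt. intro hneg.
  set (E := fun s => 0 <= s <= t1 /\ forall r, 0 <= r <= s -> 0 < Psi r).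
  assert (hE0 : E 0). { split. lra. intros r hr. replace r with 0 by lra. lra. }
  assert (hEb : bound E). { exists t1. intros s [hs _]. lra. }
  destruct (completeness E hEb (ex_intro _ 0 hE0)) as [ts [hub hlub]].
  assert (hts0 : 0 <= ts) by (apply hub; auto).
  assert (hts1 : ts <= t1) by (apply hlub; intros s [hs _]; lra).
  assert (hbelow : forall r, 0 <= r < ts -> 0 < Psi r).
  { intros r hr. apply NNPP. intro hn.
    assert (ts <= r). { apply hlub. intros s [hs1 hs2]. apply Rnot_lt_le. intro hrs. apply hn. apply hs2. lra. }
    lra. }
  assert (hPts : 0 < Psi ts).
  { destruct hts0 as [htsp | hts00]; [| rewrite <- hts00; lra].
    assert (hVnn : forall r, 0 < r < ts -> 0 <= Vpol2 r).
    { intros r hr. rewrite <- hV0. apply (lim_right_le Vpol2 0 r (Vpol2 r)); try lra; auto.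
      intros x hx. apply (mono_open Vpol2 dV 0 ts); try lra.
      - intros z hz. apply (proj2 (hder z ltac:(lra))).
      - intros z hz. unfold dV. assert (0 < Psi z) by (apply hbelow; lra).
        apply Rmult_le_pos. lra. apply Rlt_le, Rdiv_lt_0_compat; lra. }
    assert (hdPle : forall z, 0 < z < ts -> dP z <= 0).
    { intros z hz. unfold dP. assert (0 < Psi z) by (apply hbelow; lra).
      assert (0 <= Vpol2 z) by (apply hVnn; lra).
      assert (0 < Psi z / (Psi z + 1)) by (apply Rdiv_lt_0_compat; lra).
      assert (0 < (Psi z + Pr) / (Vpol2 z + pol1)) by (apply Rdiv_lt_0_compat; lra).
      assert (0 < lp * (Psi z / (Psi z + 1)) * ((Psi z + Pr) / (Vpol2 z + pol1))).
      { apply Rmult_lt_0_compat; [apply Rmult_lt_0_compat|]; lra. }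
      lra. }
    assert (hPle : forall r, 0 < r < ts -> Psi r <= Pb).
    { intros r hr. rewrite <- hP0. apply (lim_right_ge Psi 0 r (Psi r)); try lra; auto.
      intros x hx. 
      assert (- Psi x <= - Psi r).
      { apply (mono_open (fun t => - Psi t) (fun t => - dP t) 0 ts); try lra.
        - intros z hz. apply (is_derive_opp Psi). apply (proj1 (hder z ltac:(lra))).
        - intros z hz. assert (dP z <= 0) by (apply hdPle; lra). lra. }
      lra. }
    set (K := lp * (Pb + Pr) / pol1).
    assert (hK : 0 < K) by (unfold K; apply Rdiv_lt_0_compat; [apply Rmult_lt_0_compat|]; lra).
    set (h := fun r => Psi r * exp (K * r)).
    set (dh := fun r => dP r * exp (K * r) + Psi r * (K * exp (K * r))).
    assert (hdh : forall r, 0 < r < ts -> is_derive h r (dh r)).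
    { intros r hr. unfold h, dh.
      apply (is_derive_mult Psi (fun r => exp (K * r))).
      - apply (proj1 (hder r ltac:(lra))).
      - auto_derive; auto. ring.
      - intros; apply Rmult_comm. }
    assert (hdhp : forall r, 0 < r < ts -> 0 <= dh r).
    { intros r hr. unfold dh.
      assert (hp : 0 < Psi r) by (apply hbelow; lra).
      assert (hV : 0 <= Vpol2 r) by (apply hVnn; lra).
      assert (hPb' : Psi r <= Pb) by (apply hPle; lra).
      assert (he : 0 < exp (K * r)) by apply exp_pos.
      replace (dP r * exp (K * r) + Psi r * (K * exp (K * r))) with (exp (K * r) * (dP r + K * Psi r)) by ring.
      apply Rmult_le_pos; [lra|].
      unfold dP.
      assert (q1 : Psi r / (Psi r + 1) <= Psi r).
      { apply Rmult_le_reg_r with (Psi r + 1). lra. field_simplify; nra. }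
      assert (q2 : (Psi r + Pr) / (Vpol2 r + pol1) <= (Pb + Pr) / pol1).
      { unfold Rdiv. apply Rmult_le_compat; try lra.
        apply Rlt_le, Rinv_0_lt_compat; lra.
        apply Rinv_le_contravar; lra. }
      assert (q3 : 0 <= Psi r / (Psi r + 1)) by (apply Rlt_le, Rdiv_lt_0_compat; lra).
      assert (q4 : 0 <= (Psi r + Pr) / (Vpol2 r + pol1)) by (apply Rlt_le, Rdiv_lt_0_compat; lra).
      assert (q5 : Psi r / (Psi r + 1) * ((Psi r + Pr) / (Vpol2 r + pol1)) <= Psi r * ((Pb + Pr) / pol1)).
      { apply Rmult_le_compat; lra. }
      assert (q6 : K * Psi r = lp * (Psi r * ((Pb + Pr) / pol1))) by (unfold K; field; lra).
      rewrite q6. nra. }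
    set (c0 := Pb * exp (- K * t1)).
    assert (hc0 : 0 < c0) by (unfold c0; apply Rmult_lt_0_compat; [lra | apply exp_pos]).
    assert (hlow : forall r, 0 < r < ts -> c0 <= Psi r).
    { intros r hr.
      assert (hPr0 : Pb <= h r).
      { rewrite <- hP0. apply (lim_right_le Psi 0 r (h r)); try lra; auto.
        intros x hx.
        assert (hx1 : h x <= h r) by (apply (mono_open h dh 0 ts); auto; lra).
        assert (0 < Psi x) by (apply hbelow; lra).
        assert (1 <= exp (K * x)).
        { assert (0 <= K * x) by (apply Rmult_le_pos; lra). generalize (exp_ineq1_le (K * x)); lra. }
        assert (Psi x * 1 <= Psi x * exp (K * x)) by (apply Rmult_le_compat_l; lra).
        unfold h in *. lra. }
      unfold h in hPr0. unfold c0.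
      assert (hexp : exp (- K * t1) * exp (K * r) <= 1).
      { rewrite <- exp_plus, <- exp_0. left. apply exp_increasing.
        assert (K * r < K * t1) by (apply Rmult_lt_compat_l; lra). lra. }
      assert (0 <= exp (- K * t1)) by (left; apply exp_pos).
      assert (0 < Psi r) by (apply hbelow; lra).
      assert (Pb * exp (- K * t1) <= Psi r * exp (K * r) * exp (- K * t1)) by (apply Rmult_le_compat_r; lra).
      assert (Psi r * (exp (- K * t1) * exp (K * r)) <= Psi r * 1) by (apply Rmult_le_compat_l; lra).
      lra. }
    assert (c0 <= Psi ts) by (apply (cont_left_ge Psi ts ts c0); auto; intros; apply hlow; lra).
    lra. }
  assert (hnear : exists eta, 0 < eta /\ forall r, ts <= r < ts + eta -> 0 < Psi r).
  { destruct hts0 as [htsp | hts00].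
    - destruct (cont_eps Psi ts (cP ts htsp) (Psi ts) hPts) as [d [hd hd']].
      exists d. split; auto. intros r hr. specialize (hd' r ltac:(rewrite Rabs_right; lra)).
      apply Rabs_lt_between in hd'. lra.
    - rewrite <- hts00 in hPts |- *.
      destruct (eP (Psi 0) hPts) as [d [hd hd']].
      exists d. split; auto. intros r hr. destruct (proj1 hr) as [h0|h0].
      + specialize (hd' r ltac:(lra)). apply Rabs_lt_between in hd'. lra.
      + subst r. lra. }
  destruct hnear as [eta [heta hnr]].
  destruct (Rle_lt_or_eq_dec ts t1 hts1) as [hlt|heq].
  - set (s' := Rmin (ts + eta / 2) t1).
    assert (s' <= ts + eta / 2) by apply Rmin_l. assert (s' <= t1) by apply Rmin_r.
    assert (ts < s') by (unfold s'; apply Rmin_glb_lt; lra).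
    assert (E s').
    { split. lra. intros r hr. destruct (Rlt_or_le r ts). apply hbelow; lra. apply hnr; lra. }
    assert (s' <= ts) by (apply hub; auto). lra.
  - subst ts. lra.
Qed.

Theorem propositionB1 (p : LPMF_params) (hp : params_ok p)
    (hb : 0 < p_b p < 1)
    (m w : R -> R -> R) (Vmat Vcm Vcw Psi Vpol2 : R -> R)
    (hsol : LPMF_solution p m w Vmat Vcm Vcw Psi Vpol2) :
  forall v t, 0 <= v < v0 p -> 0 <= t -> m v t = 0 /\ w v t = 0.
Proof.
  destruct hp as [hla [hlc [hld [hlm [hln [hlp [hpol [hPb [hPr hPs]]]]]]]]].
  destruct hsol as [hnn [hcm [hcw [hinit [hbd [hpde [hsig [hVm0 [hVcm0 [hVcw0 [hVp0 [hPsi0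
    [lVm [lVcm [lVcw [lPsi [lVp2 hode]]]]]]]]]]]]]]]]].
  assert (hPsi : forall t, 0 <= t -> 0 < Psi t).
  { apply (psi_pos (lam_p p) (lam_pol1 p) (Psi_r p) (Psi_bar p) Psi Vpol2); auto.
    intros t ht. destruct (hode t ht) as [_ [_ [_ [h1 h2]]]]. split; auto. }
  set (S := fun t => Vmat t + Vcm t + Vcw t + lam_pol1 p).
  assert (hS : forall t, 0 <= t -> lam_pol1 p <= S t).
  { set (A := fun t => lam_p p * Psi t / Vp p Vmat Vcm Vcw Psi t).
    set (X := fun t => lam_c p * lam_n p + lam_d p * Sigma p Psi m t + lam_d p * Sigma p Psi w t).
    set (Y := fun t => lam_c p * lam_n p + lam_d p * Sigma p Psi m t).
    set (dS := fun t =>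
      (A t * (Vmat t + lam_pol1 p) - Phi p Vmat Psi t * X t) +
      (A t * Vcm t + Phi p Vmat Psi t * Y t - lam_m p * Vcm t) +
      (A t * Vcw t + lam_d p * Phi p Vmat Psi t * Sigma p Psi w t + lam_m p * Vcm t) + 0).
    assert (hdS : forall t, 0 < t -> is_derive S t (dS t)).
    { intros t ht. destruct (hode t ht) as [d1 [d2 [d3 _]]].
      unfold S, dS. apply (is_derive_plus (fun t => Vmat t + Vcm t + Vcw t) (fun _ => lam_pol1 p)).
      apply (is_derive_plus (fun t => Vmat t + Vcm t) Vcw).
      apply (is_derive_plus Vmat Vcm). exact d1. exact d2. exact d3.
      apply is_derive_Reals; apply derivable_pt_lim_const. }
    assert (hdSp : forall t, 0 < t -> 0 <= dS t).
    { intros t ht. 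
      assert (e : dS t = A t * S t) by (unfold dS, S, X, Y; ring).
      rewrite e. unfold A, Vp. fold (S t).
      assert (0 < Psi t) by (apply hPsi; lra).
      destruct (Req_dec (S t) 0) as [h0|h0].
      - rewrite h0. lra.
      - replace (lam_p p * Psi t / ((Psi t + 1) * S t) * S t) with (lam_p p * Psi t / (Psi t + 1)) by (field; lra).
        apply Rlt_le, Rdiv_lt_0_compat; [apply Rmult_lt_0_compat|]; lra. }
    assert (hSr : forall eps, 0 < eps -> exists d, 0 < d /\ forall x, 0 < x < 0 + d -> Rabs (S x - S 0) < eps).
    { intros eps heps.
      destruct (right_cont_eps Vmat 0 lVm (eps/3) ltac:(lra)) as [d1 [hd1 h1]].
      destruct (right_cont_eps Vcm 0 lVcm (eps/3) ltac:(lra)) as [d2 [hd2 h2]].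
      destruct (right_cont_eps Vcw 0 lVcw (eps/3) ltac:(lra)) as [d3 [hd3 h3]].
      exists (Rmin d1 (Rmin d2 d3)). split. repeat apply Rmin_pos; auto.
      intros x hx.
      assert (Rmin d1 (Rmin d2 d3) <= d1) by apply Rmin_l.
      assert (Rmin d1 (Rmin d2 d3) <= Rmin d2 d3) by apply Rmin_r.
      assert (Rmin d2 d3 <= d2) by apply Rmin_l. assert (Rmin d2 d3 <= d3) by apply Rmin_r.
      specialize (h1 x ltac:(lra)). specialize (h2 x ltac:(lra)). specialize (h3 x ltac:(lra)).
      apply Rabs_lt_between in h1. apply Rabs_lt_between in h2. apply Rabs_lt_between in h3.
      apply Rabs_def1; unfold S; lra. }
    intros t ht. destruct ht as [ht|ht].
    - assert (S 0 = lam_pol1 p) by (unfold S; rewrite hVm0, hVcm0, hVcw0; ring).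
      rewrite <- H. apply (lim_right_le S 0 t (S t)); auto.
      intros x hx. apply (mono_open S dS 0 (t + 1)); auto; try lra.
      + intros z hz; apply hdS; lra.
      + intros z hz; apply hdSp; lra.
    - subst t. unfold S; rewrite hVm0, hVcm0, hVcw0; lra. }
  assert (hrho : forall t, 0 < t -> 0 <= rho_p p Vmat Vcm Vcw Psi t).
  { intros t ht. unfold rho_p, Vp. fold (S t).
    assert (0 < Psi t) by (apply hPsi; lra). assert (lam_pol1 p <= S t) by (apply hS; lra).
    apply Rlt_le, Rdiv_lt_0_compat. apply Rmult_lt_0_compat; lra.
    apply Rmult_lt_0_compat; lra. }
  intros v t hv ht.
  set (V := (v + v0 p) / 2).
  assert (hV : 0 < V < v0 p) by (unfold V; lra).
  assert (hvV : 0 <= v <= V) by (unfold V; lra).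
  assert (hmz : forall v t, 0 <= v <= V -> 0 <= t -> m v t = 0).
  { apply (zero_below p Vmat Vcm Vcw Psi m V); try lra.
    - exact hrho.
    - intros; apply hnn; auto.
    - exact hcm.
    - intros; apply hinit; auto.
    - intros; apply hbd; auto.
    - intros v' t' hv' hvV' ht'.
      destruct (hpde v' t' hv' ht' ltac:(lra)) as [e1 [e2 [e3 [e4 [e5 [e6 [e7 [e8 [e9 e10]]]]]]]]].
      repeat split; auto. rewrite e9.
      assert (0 <= mu p * m v' t').
      { apply Rmult_le_pos. unfold mu; lra. apply hnn; lra. }
      lra. }
  split. apply hmz; auto.
  apply (zero_below p Vmat Vcm Vcw Psi w V); try lra.
  - exact hrho.
  - intros; apply hnn; auto.
  - exact hcw.
  - intros; apply hinit; auto.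
  - intros; apply hbd; auto.
  - intros v' t' hv' hvV' ht'.
    destruct (hpde v' t' hv' ht' ltac:(lra)) as [e1 [e2 [e3 [e4 [e5 [e6 [e7 [e8 [e9 e10]]]]]]]]].
    repeat split; auto. rewrite e10. rewrite (hmz v' t') by lra. lra.
Qed.
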